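(* Let $(\mathcal{G},\kappa)$ be a reaction network with species $\mathcal{S}=\{S_1,\dots,S_n\}$ whose positive recurrent irreducible components are $\Gamma_l=\{x\in\mathbb{Z}^{\mathcal{S}}_{\ge0}\mid\sum_{i}x_i=l\}$, $l\in\mathcal{I}$, with stationary distributions $\pi_l$ that are strictly positive on $\Gamma_l$, where $\mathcal{I}=\mathbb{Z}_{\ge1}$. Then the following are equivalent: (1) $(\mathcal{G},\kappa)$ has product-form stationary distribution, i.e. there are functions $f_i:\mathbb{Z}_{\ge 0}\to\mathbb{R}_{>0}$ ($S_i\in\mathcal{S}$) with $\pi_l(x)=Z_l^{-1}\prod_i f_i(x_i)$ for all $l\in\mathcal{I}$, $x\in\Gamma_l$, where $Z_l=\sum_{x\in\Gamma_l}\prod_if_i(x_i)$; (2) (a) for all $i$ with $i,i+1\in\mathcal{I}$, all $j,k$, and all $x,x+e_j-e_k\in\Gamma_i$, $y,y+e_j-e_k\in\Gamma_{i+1}$ with $x_j=y_j$, $x_k=y_k$: $\pi_i(x+e_j-e_k)\pi_{i+1}(y)=\pi_{i+1}(y+e_j-e_k)\pi_i(x)$; and (b) for all $i$ with $i,i+1,i+2\in\mathcal{I}$, all $j,k$, and all $x,z\in\Gamma_i$, $x+e_j,y,z+e_k,w\in\Gamma_{i+1}$, $y+e_j,w+e_k\in\Gamma_{i+2}$ with $x_j=y_j$ and $z_k=w_k$: $\pi_{i+1}(x+e_j)\pi_{i+1}(y)\pi_{i+2}(w+e_k)\pi_i(z)=\pi_{i+1}(z+e_k)\pi_{i+1}(w)\pi_{i+2}(y+e_j)\pi_i(x)$.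 Moreover, if instead $\mathcal{I}=\mathbb{Z}_{\ge q}$ for some $q\ge2$ (all other hypotheses unchanged), then (1) implies (2).
   Context: A reaction network $\mathcal{G}$ with rates $\kappa$ has a continuous-time Markov chain on $\mathbb{Z}^n_{\ge0}$; an irreducible component is a nonempty set $\Gamma$ such that for $x\in\Gamma$, $u$ is reachable from $x$ iff $u\in\Gamma$; on a positive recurrent irreducible component the stationary distribution is unique. $e_i$ denotes the $i$-th standard basis vector. *)

(* Defs.v *)
From HB Require Import structures.
From mathcomp Require Import all_boot all_order all_algebra.
From mathcomp Require Import reals.
Set Implicit Arguments. Unset Strict Implicit. Unset Printing Implicit Defensive.
Import Order.TTheory GRing.Theory Num.Theory.
Local Open Scope ring_scope.

Notation state n := 'rV[int]_n.

Definition evec (n : nat) (j : 'I_n) : state n := delta_mx 0 j.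

Definition nonneg (n : nat) (x : state n) : bool := [forall i, 0 <= x 0 i].

Definition inGamma (n l : nat) (x : state n) : bool :=
  nonneg x && (\sum_i x 0 i == l%:Z).

(* sum of F over the finite set Gamma_l, enumerated via {ffun 'I_n -> 'I_l.+1} *)
Definition gsum (R : realType) (n l : nat) (F : state n -> R) : R :=
  \sum_(x : {ffun 'I_n -> 'I_l.+1} | (\sum_i (x i : nat) == l)%N)
     F (\row_i ((x i : nat)%:Z)).

Definition reaction (R : realType) (n : nat) :=
  ('rV[nat]_n * 'rV[nat]_n * R)%type.

Definition rsrc (R : realType) n (r : reaction R n) := r.1.1.
Definition rtgt (R : realType) n (r : reaction R n) := r.1.2.
Definition rrate (R : realType) n (r : reaction R n) := r.2.

Definition zeta (R : realType) n (r : reaction R n) : state n :=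
  map_mx (fun k : nat => k%:Z) (rtgt r) - map_mx (fun k : nat => k%:Z) (rsrc r).

(* stochastic mass-action intensity: kappa * prod_i x_i!/(x_i - y_i)! (0 off Z^n_{>=0}) *)
Definition lam (R : realType) n (r : reaction R n) (x : state n) : R :=
  if nonneg x then rrate r * \prod_i ((absz (x 0 i)) ^_ (rsrc r 0 i))%:R else 0.

Definition step (R : realType) n (G : seq (reaction R n)) (x u : state n) : Prop :=
  exists2 r, r \in G & 0 < lam r x /\ u = x + zeta r.

Inductive reach (R : realType) n (G : seq (reaction R n)) : state n -> state n -> Prop :=
  | reach_refl x : reach G x x
  | reach_step x y u : step G x y -> reach G y u -> reach G x u.

Definition network (R : realType) n (G : seq (reaction R n)) : Prop :=
  forall r, r \in G -> 0 < rrate r.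

Definition irred_component (R : realType) n (G : seq (reaction R n)) (Gam : state n -> bool) : Prop :=
  (exists x, Gam x) /\ forall x, Gam x -> forall u, reach G x u <-> Gam u.

(* pi is a stationary distribution of the CTMC on the (finite) component Gamma_l,
   extended by zero outside Gamma_l: probability + global balance pi Q = 0. *)
Definition stationary_on (R : realType) n (G : seq (reaction R n)) (l : nat) (pi : state n -> R) : Prop :=
  [/\ forall x, 0 <= pi x,
      forall x, ~~ inGamma l x -> pi x = 0,
      gsum l pi = 1 &
      forall x, inGamma l x ->
        \sum_(r <- G) pi (x - zeta r) * lam r (x - zeta r)
        = pi x * \sum_(r <- G) lam r x].

(* standing hypotheses: for each l in I, Gamma_l is a (positive recurrent, being finite
   and closed) irreducible component with stationary distribution pi l, strictly
   positive on Gamma_l *)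
Definition setting (R : realType) n (G : seq (reaction R n)) (I : pred nat) (pi : nat -> state n -> R) : Prop :=
  network G /\
  forall l, I l ->
    [/\ irred_component G (inGamma l),
        stationary_on G l (pi l) &
        forall x, inGamma l x -> 0 < pi l x].

Definition product_form (R : realType) n (I : pred nat) (pi : nat -> state n -> R) : Prop :=
  exists f : 'I_n -> nat -> R,
    (forall i m, 0 < f i m) /\
    forall l, I l -> forall x, inGamma l x ->
      pi l x = (gsum l (fun y => \prod_i f i (absz (y 0 i))))^-1
               * \prod_i f i (absz (x 0 i)).

Definition cond2a (R : realType) n (I : pred nat) (pi : nat -> state n -> R) : Prop :=
  forall i, I i -> I i.+1 -> forall (j k : 'I_n) (x y : state n),
    inGamma i x -> inGamma i (x + evec j - evec k) ->
    inGamma i.+1 y -> inGamma i.+1 (y + evec j - evec k) ->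
    x 0 j = y 0 j -> x 0 k = y 0 k ->
    pi i (x + evec j - evec k) * pi i.+1 y
    = pi i.+1 (y + evec j - evec k) * pi i x.

Definition cond2b (R : realType) n (I : pred nat) (pi : nat -> state n -> R) : Prop :=
  forall i, I i -> I i.+1 -> I i.+2 -> forall (j k : 'I_n) (x y z w : state n),
    inGamma i x -> inGamma i z ->
    inGamma i.+1 (x + evec j) -> inGamma i.+1 y ->
    inGamma i.+1 (z + evec k) -> inGamma i.+1 w ->
    inGamma i.+2 (y + evec j) -> inGamma i.+2 (w + evec k) ->
    x 0 j = y 0 j -> z 0 k = w 0 k ->
    pi i.+1 (x + evec j) * pi i.+1 y * pi i.+2 (w + evec k) * pi i z
    = pi i.+1 (z + evec k) * pi i.+1 w * pi i.+2 (y + evec j) * pi i x.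

(* Main.v *)
Require Import Defs.
From HB Require Import structures.
From mathcomp Require Import all_boot all_order all_algebra.
From mathcomp Require Import reals.
From mathcomp Require Import ring lra zify.
Set Implicit Arguments. Unset Strict Implicit. Unset Printing Implicit Defensive.
Import Order.TTheory GRing.Theory Num.Theory.
Local Open Scope ring_scope.


Section Vec.
Variable n : nat.
Implicit Types (x y : state n) (i j k a b : 'I_n).

Lemma evecE (r : 'I_1) j i : evec j r i = if i == j then 1 else 0.
Proof. by rewrite /evec mxE !ord1 eqxx /=; case: (i == j). Qed.

Definition rsum x := \sum_i x 0 i.

Lemma rsumD x y : rsum (x + y) = rsum x + rsum y.
Proof. by rewrite /rsum -big_split; apply: eq_bigr => i _; rewrite mxE. Qed.
Lemma rsumN x : rsum (- x) = - rsum x.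
Proof. by rewrite /rsum -sumrN; apply: eq_bigr => i _; rewrite mxE. Qed.
Lemma rsumZ c x : rsum (c *: x) = c * rsum x.
Proof. by rewrite /rsum mulr_sumr; apply: eq_bigr => i _; rewrite mxE. Qed.
Lemma rsum_evec j : rsum (evec j) = 1.
Proof.
rewrite /rsum (bigD1 j) //= evecE eqxx big1 ?addr0 // => i /negbTE.
by rewrite evecE => ->.
Qed.

Lemma inGammaP l x : reflect ((forall i, 0 <= x 0 i) /\ rsum x = l%:Z) (inGamma l x).
Proof.
rewrite /inGamma /nonneg; apply: (iffP andP) => [[/forallP H /eqP E]|[H E]].
  by split.
by split; [apply/forallP | apply/eqP].
Qed.

Lemma entry_add x a i : (x + evec a) 0 i = x 0 i + (if i == a then 1 else 0).
Proof. by rewrite mxE evecE. Qed.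
Lemma entry_sub x a i : (x - evec a) 0 i = x 0 i - (if i == a then 1 else 0).
Proof. by rewrite 2!mxE evecE. Qed.
Lemma entry_mv x a b i : (x + evec a - evec b) 0 i =
  x 0 i + (if i == a then 1 else 0) - (if i == b then 1 else 0).
Proof. by rewrite mxE entry_add mxE evecE. Qed.

Lemma inG_add l x a : inGamma l x -> inGamma l.+1 (x + evec a).
Proof.
move=> /inGammaP [H E]; apply/inGammaP; split.
  by move=> i; rewrite entry_add; have := H i; case: (i == a); lia.
by rewrite rsumD rsum_evec E; lia.
Qed.

Lemma inG_sub l x a : inGamma l.+1 x -> 0 < x 0 a -> inGamma l (x - evec a).
Proof.
move=> /inGammaP [H E] Ha; apply/inGammaP; split.
  move=> i; rewrite entry_sub; have := H i.
  by case: eqVneq => [->|_]; lia.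
by rewrite rsumD rsumN rsum_evec E; lia.
Qed.

Lemma inG_mv l x a b : inGamma l x -> 0 < x 0 b -> inGamma l (x + evec a - evec b).
Proof.
move=> /inGammaP [H E] Hb; apply/inGammaP; split.
  move=> i; rewrite entry_mv; have := H i.
  by case: (eqVneq i b) => [->|_]; rewrite ?eqxx; case: (_ == a); lia.
by rewrite rsumD rsumN rsumD !rsum_evec E; lia.
Qed.

Lemma rest0_1 x a : (forall i, 0 <= x 0 i) -> rsum x = x 0 a ->
  forall i, i != a -> x 0 i = 0.
Proof.
move=> H; rewrite /rsum (bigD1 a) //= => E0.
have E : \sum_(i | i != a) x 0 i = 0.
  by apply: (addrI (x 0 a)); rewrite addr0; exact: E0.
exact: (psumr_eq0P (fun i _ => H i) E).
Qed.

Lemma rest0_2 x a b : a != b -> (forall i, 0 <= x 0 i) -> rsum x = x 0 a + x 0 b ->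
  forall i, i != a -> i != b -> x 0 i = 0.
Proof.
move=> ab H; rewrite /rsum (bigD1 a) //= (bigD1 b) /=; last by rewrite eq_sym.
move=> E0.
have E : \sum_(i | (i != a) && (i != b)) x 0 i = 0.
  by apply: (addrI (x 0 a + x 0 b)); rewrite addr0 -addrA; exact: E0.
move=> i ia ib; apply: (psumr_eq0P (fun i _ => H i) E); by rewrite ib ia.
Qed.

Lemma exists_pos1 x a : (forall i, 0 <= x 0 i) -> rsum x != x 0 a ->
  exists2 j, j != a & 0 < x 0 j.
Proof.
move=> H; case: (pickP (fun j => (j != a) && (0 < x 0 j))) => [j /andP[]|none].
  by exists j.
rewrite /rsum (bigD1 a) //= big1 ?addr0 ?eqxx // => i ia.
have := none i; rewrite ia /= => /negbT; rewrite -leNgt => h.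
by apply/eqP; rewrite eq_le h H.
Qed.

Lemma exists_pos2 x a b : a != b -> (forall i, 0 <= x 0 i) -> rsum x != x 0 a + x 0 b ->
  exists j, [/\ j != a, j != b & 0 < x 0 j].
Proof.
move=> ab H; case: (pickP (fun j => [&& (j != a), (j != b) & (0 < x 0 j)])) => [j /and3P[]|none].
  by exists j.
rewrite /rsum (bigD1 a) //= (bigD1 b) /=; last by rewrite eq_sym.
rewrite big1 ?addr0 ?addrA ?eqxx // => i /andP[ia ib].
have := none i; rewrite ia ib /= => /negbT; rewrite -leNgt => h.
by apply/eqP; rewrite eq_le h H.
Qed.

Lemma rsum_ge2 x a b : a != b -> (forall i, 0 <= x 0 i) -> x 0 a + x 0 b <= rsum x.
Proof.
move=> ab H; rewrite /rsum (bigD1 a) //= (bigD1 b) /=; last by rewrite eq_sym.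
by rewrite addrA lerDl sumr_ge0.
Qed.

Lemma rsum_ge1 x a : (forall i, 0 <= x 0 i) -> x 0 a <= rsum x.
Proof.
move=> H; rewrite /rsum (bigD1 a) //=.
by rewrite lerDl sumr_ge0.
Qed.

End Vec.


Section PF.
Variables (R : realType) (n : nat).
Definition FF (f : 'I_n -> nat -> R) (x : state n) := \prod_i f i (absz (x 0 i)).

Lemma FF_shift f (x y d : state n) : (forall i, d 0 i != 0 -> x 0 i = y 0 i) ->
  FF f (x + d) * FF f y = FF f (y + d) * FF f x.
Proof.
move=> H; rewrite /FF -!big_split /=; apply: eq_bigr => i _; rewrite !mxE.
case: (eqVneq (d 0 i) 0) => [->|/H ->]; last by [].
by rewrite !addr0 mulrC.
Qed.

Lemma alg2b (a b c p q r s t u v w : R) : p * q = r * s -> t * u = v * w ->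
  (a * p) * (a * q) * (b * v) * (c * w) = (a * t) * (a * u) * (b * r) * (c * s).
Proof.
move=> E1 E2; transitivity (a * a * b * c * (p * q) * (v * w)); first by ring.
by rewrite E1 -E2; ring.
Qed.

Lemma PF_cond (I : pred nat) (pi : nat -> state n -> R) :
  product_form I pi -> cond2a I pi /\ cond2b I pi.
Proof.
move=> [f [fpos Hf]]; split.
  move=> i Ii Ii1 j k x y xi xm yi ym xj xk.
  rewrite !Hf //.
  have E := @FF_shift f x y (evec j - evec k).
  rewrite /FF !addrA in E; rewrite mulrACA E; first by ring.
  move=> m; rewrite mxE evecE mxE evecE.
  by case: (eqVneq m j) => [->|_] //; case: (eqVneq m k) => [->|_] //; rewrite subrr eqxx.
move=> l Ii Ii1 Ii2 j k x y z w xi zi xji yi zki wi yji wki xj zk.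
rewrite !Hf //.
have E1 := @FF_shift f x y (evec j).
have E2 := @FF_shift f z w (evec k).
rewrite /FF in E1 E2.
apply: alg2b; [apply: E1 | apply: E2] => m; rewrite evecE;
  by [case: (eqVneq m j) => [->|]; rewrite ?eqxx | case: (eqVneq m k) => [->|]; rewrite ?eqxx].
Qed.
End PF.


Section Main.
Variables (R : realType) (n : nat) (pi : nat -> state n -> R) (i0 i1 : 'I_n).
Hypothesis Hi1 : forall j : 'I_n, j != i0 -> i1 != i0.
Hypothesis Hpos : forall l, (1 <= l)%N -> forall x, inGamma l x -> 0 < pi l x.
Hypothesis H2a : cond2a (fun l => (1 <= l)%N) pi.
Hypothesis H2b : cond2b (fun l => (1 <= l)%N) pi.

Definition pt (j : 'I_n) (a b : nat) : state n := a%:Z *: evec i0 + b%:Z *: evec j.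

Lemma pt_entry (r : 'I_1) j a b i : pt j a b r i =
  a%:Z * (if i == i0 then 1 else 0) + b%:Z * (if i == j then 1 else 0).
Proof. by rewrite /pt mxE mxE evecE mxE evecE. Qed.

Lemma pt_in j a b : inGamma (a + b) (pt j a b).
Proof.
apply/inGammaP; split.
  by move=> i; rewrite pt_entry; case: (i == i0); case: (i == j); lia.
by rewrite /pt rsumD !rsumZ !rsum_evec; lia.
Qed.

Lemma pt_in' j a b l : (a + b)%N = l -> inGamma l (pt j a b).
Proof. by move=> <-; apply: pt_in. Qed.

Ltac ptid := apply/rowP => i; rewrite ?entry_add ?entry_mv !pt_entry;
  repeat case: (_ == _); lia.

Lemma ptS0 j a b : pt j a b + evec i0 = pt j a.+1 b. Proof. ptid. Qed.
Lemma ptS1 j a b : pt j a b + evec j = pt j a b.+1. Proof. ptid. Qed.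
Lemma ptmv j a b : pt j a b.+1 + evec i0 - evec j = pt j a.+1 b. Proof. ptid. Qed.
Lemma pt0 j k a : pt j a 0 = pt k a 0. Proof. ptid. Qed.
Lemma ptsw j k a : pt j a 1 + evec k - evec j = pt k a 1. Proof. ptid. Qed.

Definition P j a b := pi (a + b)%N (pt j a b).
Lemma P_gt0 j a b : (0 < a + b)%N -> 0 < P j a b.
Proof. by move=> h; apply: Hpos => //; apply: pt_in. Qed.
Lemma P_neq0 j a b : (0 < a + b)%N -> P j a b != 0.
Proof. by move=> h; rewrite gt_eqF // P_gt0. Qed.

Lemma Mlev j a b a' b' : j != i0 -> (a + b = a' + b')%N -> (0 < a + b)%N ->
  P j a.+1 b * P j a b.+1 * P j a'.+1 b'.+1 * P j a' b' =
  P j a' b'.+1 * P j a'.+1 b' * P j a.+1 b.+1 * P j a b.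
Proof.
move=> ji0 E h.
have := @H2b (a + b)%N h (ltn0Sn _) (ltn0Sn _) i0 j (pt j a b) (pt j a b.+1) (pt j a' b') (pt j a'.+1 b').
rewrite !ptS0 !ptS1 /P.
have e1 : (a.+1 + b = (a + b).+1)%N by lia.
have e2 : (a + b.+1 = (a + b).+1)%N by lia.
have e3 : (a'.+1 + b' = (a + b).+1)%N by lia.
have e4 : (a' + b'.+1 = (a + b).+1)%N by lia.
have e5 : (a.+1 + b.+1 = (a + b).+2)%N by lia.
have e6 : (a'.+1 + b'.+1 = (a + b).+2)%N by lia.
rewrite e1 e2 e3 e4 e5 e6 E.
move=> -> //; try (apply: pt_in'; lia).
  by rewrite !pt_entry eqxx eq_sym (negbTE ji0).
by rewrite !pt_entry eqxx (negbTE ji0).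
Qed.


Definition r j u b := P j u.+1 b / P j u b.+1.
Lemma r_gt0 j u b : 0 < r j u b.
Proof. by rewrite /r divr_gt0 // P_gt0 //; lia. Qed.
Lemma r_neq0 j u b : r j u b != 0.
Proof. by rewrite gt_eqF // r_gt0. Qed.

Lemma r_step j u b : j != i0 -> r j u.+1 b.+1 * r j u b = r j u.+1 b * r j u b.+1.
Proof.
move=> ji0.
have H := @Mlev j u.+1 b u b.+1 ji0 (addSnnS _ _) (ltn0Sn _).
rewrite /r !mulf_div; apply/eqP; rewrite eqr_div ?mulf_neq0 ?P_neq0 //; try lia.
apply/eqP.
transitivity (P j u b.+2 * P j u.+1 b.+1 * P j u.+2 b.+1 * P j u.+1 b); first by ring.
by rewrite -H; ring.
Qed.

Lemma sep_gen (q : nat -> nat -> R) : (forall u b, q u b != 0) ->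
  (forall u b, q u.+1 b.+1 * q u b = q u.+1 b * q u b.+1) ->
  forall u b, q u b * q 0 0 = q u 0 * q 0 b.
Proof.
move=> nz st.
have A : forall b u, q u b.+1 * q 0 b = q u b * q 0 b.+1.
  move=> b; elim=> [|u IH]; first by rewrite mulrC.
  apply: (mulIf (nz u b)).
  transitivity ((q u.+1 b.+1 * q u b) * q 0 b); first by ring.
  rewrite st.
  transitivity (q u.+1 b * (q u b.+1 * q 0 b)); first by ring.
  by rewrite IH; ring.
move=> u; elim=> [|b IH]; first by [].
apply: (mulIf (nz 0 b)).
transitivity ((q u b.+1 * q 0 b) * q 0 0); first by ring.
rewrite A.
transitivity ((q u b * q 0 0) * q 0 b.+1); first by ring.
by rewrite IH; ring.
Qed.

Lemma r_sep j u b : j != i0 -> r j u b * r j 0 0 = r j u 0 * r j 0 b.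
Proof. by move=> ji0; apply: sep_gen => [u' b'|u' b']; [apply: r_neq0 | apply: r_step]. Qed.

Lemma AB_gen (A B : nat -> R) : (forall u, A u != 0) -> (forall u, B u != 0) ->
  (forall u, A u * B u.+1 = A u.+1 * B u) -> forall u, A u * B 0%N = A 0%N * B u.
Proof.
move=> nA nB st; elim=> [|u IH]; first by [].
apply: (mulIf (nA u)).
transitivity (A u.+1 * (A u * B 0%N)); first by ring.
rewrite IH.
transitivity (A 0%N * (A u.+1 * B u)); first by ring.
by rewrite -st; ring.
Qed.

Lemma P_neq1 j u : P j u 1 != 0.
Proof. by apply: P_neq0; lia. Qed.

Lemma T_step j u : j != i0 -> P i1 u 1 * P j u.+1 1 = P i1 u.+1 1 * P j u 1.
Proof.
move=> ji0; have i10 := Hi1 ji0.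
case: (eqVneq j i1) => [->|ji1]; first by rewrite mulrC.
have h1 : (0 < u + 1)%N by lia.
have H := @H2a (u + 1)%N h1 (ltn0Sn _) i1 j (pt j u 1) (pt j u.+1 1).
move: H; rewrite !ptsw /P.
have e1 : (u.+1 + 1 = (u + 1).+1)%N by lia.
rewrite e1; apply; try (apply: pt_in'; lia).
  by rewrite !pt_entry (negbTE i10) eq_sym (negbTE ji1).
by rewrite !pt_entry (negbTE ji0) eqxx.
Qed.

Lemma P0 j k a : P j a 0 = P k a 0.
Proof. by rewrite /P (pt0 j k). Qed.

Lemma T_rel j u : j != i0 -> r j u 0 * r i1 0 0 = r i1 u 0 * r j 0 0.
Proof.
move=> ji0.
have AB := @AB_gen (fun u => P i1 u 1) (fun u => P j u 1)
   (fun u => P_neq1 _ _) (fun u => P_neq1 _ _)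
   (fun u => T_step u ji0) u.
rewrite /= in AB.
rewrite /r !(P0 j i1) !mulf_div.
apply/eqP; rewrite eqr_div ?mulf_neq0 ?P_neq0 //; try lia.
apply/eqP.
transitivity (P i1 u.+1 0 * P i1 1 0 * (P i1 u 1 * P j 0 1)); first by ring.
by rewrite AB; ring.
Qed.


Lemma C1 j u b d : j != i0 -> forall x, inGamma (u + b.+1 + d)%N x ->
  x 0 i0 = u%:Z -> x 0 j = b.+1%:Z ->
  pi (u + b.+1 + d)%N (x + evec i0 - evec j) * P j u b.+1 =
  pi (u + b.+1 + d)%N x * P j u.+1 b.
Proof.
move=> ji0; elim: d => [|d IH] x xin xu xb.
  have xe : x = pt j u b.+1.
    move/inGammaP: xin => [H E].
    have i0j : i0 != j by rewrite eq_sym.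
    have z := @rest0_2 _ x i0 j i0j H.
    apply/rowP => i; rewrite pt_entry.
    case: (eqVneq i i0) => [->|ii0]; first by rewrite xu ?eqxx ?(negbTE i0j); lia.
    case: (eqVneq i j) => [->|ij]; first by rewrite xb ?eqxx ?(negbTE ji0); lia.
    rewrite z // ?(negbTE ii0) ?(negbTE ij); first by lia.
    by rewrite E xu xb; lia.
  rewrite xe ptmv /P addn0 addSnnS mulrC //.
have h0 : (0 < u + b.+1 + d)%N by lia.
rewrite addnS in xin *.
move/inGammaP: (xin) => [H E].
have [m [mi0 mj mpos]] : exists m, [/\ m != i0, m != j & 0 < x 0 m].
  apply: exists_pos2 => //; first by rewrite eq_sym.
  by rewrite E xu xb; lia.
have x'in := inG_sub xin mpos.
have x'u : (x - evec m) 0 i0 = u%:Z by rewrite entry_sub eq_sym (negbTE mi0) subr0.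
have x'b : (x - evec m) 0 j = b.+1%:Z by rewrite entry_sub eq_sym (negbTE mj) subr0.
have IH' := IH _ x'in x'u x'b.
have x'b0 : 0 < (x - evec m) 0 j by rewrite x'b.
have xb0 : 0 < x 0 j by rewrite xb.
have H2 := @H2a _ h0 (ltn0Sn _) i0 j (x - evec m) x x'in (inG_mv i0 x'in x'b0)
   xin (inG_mv i0 xin xb0) (etrans x'u (esym xu)) (etrans x'b (esym xb)).
have nz : pi (u + b.+1 + d)%N (x - evec m) != 0 by rewrite gt_eqF // Hpos.
apply: (mulIf nz).
transitivity (pi (u + b.+1 + d)%N.+1 x * (pi (u + b.+1 + d)%N (x - evec m) * P j u.+1 b)); last by ring.
rewrite -IH'.
transitivity (pi (u + b.+1 + d)%N.+1 (x + evec i0 - evec j) * pi (u + b.+1 + d)%N (x - evec m) * P j u b.+1); first by ring.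
rewrite -H2; ring.
Qed.


Lemma key j l x u b : j != i0 -> (1 <= l)%N -> inGamma l x ->
  x 0 i0 = u%:Z -> x 0 j = b.+1%:Z -> pi l (x + evec i0 - evec j) = pi l x * r j u b.
Proof.
move=> ji0 l1 xin xu xb.
have le : (u + b.+1 <= l)%N.
  move/inGammaP: (xin) => [H E].
  have i0j : i0 != j by rewrite eq_sym.
  have := rsum_ge2 i0j H.
  by rewrite E xu xb; lia.
move: xin; rewrite -(subnKC le) => xin.
have C := C1 ji0 xin xu xb.
by rewrite /r mulrA -C mulfK // P_neq0 //; lia.
Qed.

Definition h0 u := r i1 u 0.
Definition g j b := r i1 0 0 / r j 0 b.

Lemma C2 j u b : j != i0 -> r j u b * g j b = h0 u.
Proof.
move=> ji0; rewrite /g /h0.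
apply: (mulIf (r_neq0 j 0 b)); apply: (mulIf (r_neq0 j 0 0)).
rewrite mulrA divfK ?r_neq0 //.
transitivity (r j u b * r j 0 0 * r i1 0 0); first by ring.
rewrite r_sep //.
transitivity (r j u 0 * r i1 0 0 * r j 0 b); first by ring.
by rewrite T_rel //; ring.
Qed.

Definition ff (i : 'I_n) (m : nat) : R :=
  if i == i0 then \prod_(k < m) h0 k else \prod_(k < m) g i k.

Lemma ff_gt0 i m : 0 < ff i m.
Proof.
rewrite /ff; case: ifP => _; apply: prodr_gt0 => k _; first exact: r_gt0.
by rewrite /g divr_gt0 // r_gt0.
Qed.

Lemma ff_S0 u : ff i0 u.+1 = ff i0 u * h0 u.
Proof. by rewrite /ff eqxx big_ord_recr. Qed.
Lemma ff_Sj j b : j != i0 -> ff j b.+1 = ff j b * g j b.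
Proof. by move=> ji0; rewrite /ff (negbTE ji0) big_ord_recr. Qed.

Lemma Fstep j (x : state n) u b : j != i0 -> x 0 i0 = u%:Z -> x 0 j = b.+1%:Z ->
  FF ff (x + evec i0 - evec j) * g j b = FF ff x * h0 u.
Proof.
move=> ji0 xu xb.
have e1 : (x + evec i0 - evec j) 0 i0 = u.+1%:Z.
  by rewrite entry_mv eqxx eq_sym (negbTE ji0) xu; lia.
have e2 : (x + evec i0 - evec j) 0 j = b%:Z.
  by rewrite entry_mv eqxx (negbTE ji0) xb; lia.
have e3 : forall i, (i != i0) && (i != j) -> (x + evec i0 - evec j) 0 i = x 0 i.
  by move=> i /andP[ii0 ij]; rewrite entry_mv (negbTE ii0) (negbTE ij); lia.
rewrite /FF (bigD1 i0) // (bigD1 j) //= [in RHS](bigD1 i0) // [in RHS](bigD1 j) //=.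
rewrite e1 e2 xu xb /=.
under eq_bigr => i /e3 -> do [].
rewrite ff_S0 ff_Sj //; ring.
Qed.

Definition bs l := pt i1 l 0.

Lemma chain l s : (1 <= l)%N -> forall x : state n, inGamma l x -> addn (absz (x 0 i0)) s = l ->
  pi l x * FF ff (bs l) = pi l (bs l) * FF ff x.
Proof.
move=> l1; elim: s => [|s IH] x xin E.
  move/inGammaP: (xin) => [H S].
  have xl : x 0 i0 = l%:Z by have := H i0; lia.
  have z := rest0_1 H (etrans S (esym xl)).
  have -> : x = bs l.
    apply/rowP => i; rewrite pt_entry.
    case: (eqVneq i i0) => [->|ii0]; first by rewrite xl; lia.
    by rewrite z //; lia.
  by rewrite mulrC.
move/inGammaP: (xin) => [H S].
have [j ji0 xj] : exists2 j, j != i0 & 0 < x 0 j.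
  by apply: exists_pos1 => //; rewrite S; have := H i0; lia.
have xu : x 0 i0 = (absz (x 0 i0))%:Z by have := H i0; lia.
have xb : x 0 j = (subn (absz (x 0 j)) 1).+1%:Z by lia.
set u := absz (x 0 i0) in xu E.
set b := subn (absz (x 0 j)) 1 in xb.
have x'in := inG_mv i0 xin xj.
have e1 : absz ((x + evec i0 - evec j)%R 0 i0) = u.+1.
  by rewrite entry_mv eqxx eq_sym (negbTE ji0) xu; lia.
have IH2 : (addn (absz ((x + evec i0 - evec j)%R 0 i0)) s = l) by rewrite e1; lia.
have IH' := IH _ x'in IH2.
have K := key ji0 l1 xin xu xb.
have Fs := Fstep ji0 xu xb.
have hnz : h0 u != 0 by rewrite /h0 r_neq0.
apply: (mulIf hnz).
rewrite -(C2 u b ji0).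
transitivity ((pi l x * r j u b) * FF ff (bs l) * g j b); first by ring.
rewrite -K IH'.
transitivity (pi l (bs l) * (FF ff (x + evec i0 - evec j) * g j b)); first by ring.
by rewrite Fs /h0 -/(h0 u) -(C2 u b ji0); ring.
Qed.

Lemma propK l : (1 <= l)%N -> forall x, inGamma l x ->
  pi l x = (pi l (bs l) / FF ff (bs l)) * FF ff x.
Proof.
move=> l1 x xin.
move/inGammaP: (xin) => [H S].
have le : leq (absz (x 0 i0)) l by have := rsum_ge1 i0 H; have := H i0; lia.
have C := chain l1 xin (subnKC le).
have Fnz : FF ff (bs l) != 0 by rewrite gt_eqF // /FF prodr_gt0 // => i _; apply: ff_gt0.
by rewrite mulrAC -C mulfK.
Qed.

End Main.


Lemma gpt_in n l (y : {ffun 'I_n -> 'I_l.+1}) : (\sum_i (y i : nat) == l)%N ->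
  inGamma l (\row_i ((y i : nat)%:Z)).
Proof.
move=> /eqP E; apply/inGammaP; split; first by move=> i; rewrite mxE.
rewrite /rsum.
transitivity (\sum_i ((y i : nat)%:Z)); first by apply: eq_bigr => i _; rewrite mxE.
transitivity (((\sum_i (y i : nat))%N)%:Z); last by congr Posz.
by rewrite -[RHS]intz sumMz; apply: eq_bigr => i _; rewrite intz.
Qed.

Lemma assemble (R : realType) n (I : pred nat) (pi : nat -> state n -> R)
  (f : 'I_n -> nat -> R) : (forall i m, 0 < f i m) ->
  (forall l, I l -> gsum l (pi l) = 1) ->
  (forall l, I l -> exists K, forall x, inGamma l x -> pi l x = K * FF f x) ->
  product_form I pi.
Proof.
move=> fpos g1 HK; exists f; split => // l Il x xin.
have [K HKl] := HK l Il.
have E : gsum l (pi l) = K * gsum l (FF f).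
  rewrite /gsum mulr_sumr; apply: eq_bigr => y Hy; apply: HKl; exact: gpt_in.
rewrite g1 // in E.
have Znz : gsum l (FF f) != 0 by apply/eqP => Z; rewrite Z mulr0 in E; move/eqP: E; rewrite oner_eq0.
rewrite HKl //.
have -> : K = (gsum l (FF f))^-1 by rewrite -[(gsum l (FF f))^-1]mul1r E mulfK.
by [].
Qed.

Theorem theorem3p6 :
  (forall (R : realType) (n : nat) (G : seq (reaction R n)) (pi : nat -> 'rV[int]_n -> R),
      setting G (fun l => (1 <= l)%N) pi ->
      (product_form (fun l => (1 <= l)%N) pi <->
       (cond2a (fun l => (1 <= l)%N) pi /\ cond2b (fun l => (1 <= l)%N) pi)))
  /\
  (forall (R : realType) (n q : nat) (G : seq (reaction R n)) (pi : nat -> 'rV[int]_n -> R),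
      (2 <= q)%N ->
      setting G (fun l => (q <= l)%N) pi ->
      product_form (fun l => (q <= l)%N) pi ->
      cond2a (fun l => (q <= l)%N) pi /\ cond2b (fun l => (q <= l)%N) pi).
Proof.
split; last by move=> R n q G pi _ _; apply: PF_cond.
move=> R n G pi [_ Hs]; split; first exact: PF_cond.
move=> [H2a H2b].
have g1 : forall l, (1 <= l)%N -> gsum l (pi l) = 1.
  by move=> l /Hs [_ [_ _ g _] _].
have Hpos : forall l, (1 <= l)%N -> forall x, inGamma l x -> 0 < pi l x.
  by move=> l /Hs [_ _ p].
case: n G pi H2a H2b g1 Hpos Hs => [|n'] G pi H2a H2b g1 Hpos Hs.
  exists (fun _ _ => 1); split => // l l1 x /inGammaP [_ S].
  by rewrite /rsum big_ord0 in S; lia.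
have Hi1 : forall j : 'I_n'.+1, j != ord0 -> (inord 1 : 'I_n'.+1) != ord0.
  move=> j jn0; have j0 : (0 < j)%N.
    by rewrite lt0n; apply/eqP => h; move/eqP: jn0; apply; apply: val_inj.
  have := ltn_ord j => jl.
  apply/eqP => /(congr1 val) /=; rewrite inordK //; lia.
apply: (assemble (f := ff pi ord0 (inord 1))).
- by move=> i m; apply: ff_gt0.
- exact: g1.
move=> l l1; eexists => x xin.
exact: (propK Hi1 Hpos H2a H2b l1 xin).
Qed.
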